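(* For all CCSK transitions $t,u$: $t,u$ are key independent if and only if $t\odot u$.
   Context: Names $\mathsf N$ with bijection $\overline\cdot$ onto disjoint co-names; $\mathsf L=\mathsf N\cup\overline{\mathsf N}\cup\{\tau\}$ ($\alpha,\beta$ over $\mathsf L$, $\lambda$ over $\mathsf L\setminus\{\tau\}$); keys $\mathsf K$ denumerable. CCSK processes $X::=\mathbf 0\mid\alpha.X\mid X\backslash\lambda\mid X+Y\mid X|Y\mid\alpha[k].X$; $\mathrm{keys}(X)$ keys in $X$. Directions $D\in\{\mathrm L,\mathrm R\}$, $\bar{\mathrm L}=\mathrm R$, $\bar{\mathrm R}=\mathrm L$. Proof keyed labels $\theta::=\upsilon\alpha[k]\mid\upsilon\langle\upsilon_1\lambda[k],\upsilon_2\overline\lambda[k]\rangle$ ($\upsilon,\upsilon_i\in\{|_{\mathrm L},|_{\mathrm R},+_{\mathrm L},+_{\mathrm R}\}^*$), $\ell(\upsilon\alpha[k])=\alpha$, $\ell(\upsilon\langle\cdots\rangle)=\tau$, $\mathrm{key}(\theta)=k$. Forward CCSK$^{\mathrm P}$ transitions: least relation closed under (act) $\alpha.X\xrightarrow{\alpha[k]}\alpha[k].X$ if $\mathrm{keys}(X)=\emptyset$; (pre) $X\xrightarrow\theta X',\mathrm{key}(\theta)\ne k\Rightarrow\alpha[k].X\xrightarrow\theta\alpha[k].X'$; (res) $X\xrightarrow\theta X',\ell(\theta)\notin\{\lambda,\overline\lambda\}\Rightarrow X\backslash\lambda\xrightarrow\theta X'\backslash\lambda$; (par) $X\xrightarrow\theta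 X',\mathrm{key}(\theta)\notin\mathrm{keys}(Y)\Rightarrow X|Y\xrightarrow{|_{\mathrm L}\theta}X'|Y$, $Y|X\xrightarrow{|_{\mathrm R}\theta}Y|X'$; (syn) $X\xrightarrow{\upsilon_1\lambda[k]}X',Y\xrightarrow{\upsilon_2\overline\lambda[k]}Y'\Rightarrow X|Y\xrightarrow{\langle\upsilon_1\lambda[k],\upsilon_2\overline\lambda[k]\rangle}X'|Y'$; (sum) $X\xrightarrow\theta X',\mathrm{keys}(Y)=\emptyset\Rightarrow X+Y\xrightarrow{+_{\mathrm L}\theta}X'+Y$, $Y+X\xrightarrow{+_{\mathrm R}\theta}Y+X'$. Backward transitions are converses; $\bar t$ is the inverse of $t$. Paths are sequences of composable transitions; $\mathrm{keys}(r)$ is the set of keys of transitions of $r$; only processes reachable by a path from a key-free process are considered. Transitions are connected if there is a path from the source of one to the target of the other. CCSK: same processes, each CCSK$^{\mathrm P}$ transition with label $\theta$ gives a CCSK transition with label $\ell(\theta)[\mathrm{key}(\theta)]$ (bijection; $\hat t$ the CCSK$^{\mathrm P}$ transition of $t$). Independence $\iota$ on proof labels: least relation closed under (C1) $+_D\theta\mathrel\iota+_D\theta'$ if $\theta\mathrel\iota\theta'$; (P1) $|_D\theta\mathrel\iota|_D\theta'$ if $\theta\mathrel\iota\theta'$; (P2$_k$) $|_D\theta\mathrel\iota|_{\bar D}\theta'$ if keys differ; (S1) $|_D\theta\mathrel\iota\langle\theta_{\mathrm L},\theta_{\mathrm R}\rangle$ if $\theta\mathrel\iota\theta_D$; (S2)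 $\langle\theta_{\mathrm L},\theta_{\mathrm R}\rangle\mathrel\iota|_D\theta$ if $\theta_D\mathrel\iota\theta$; (S3) $\langle\theta_1,\theta_2\rangle\mathrel\iota\langle\theta_1',\theta_2'\rangle$ if $\theta_1\mathrel\iota\theta_1'$, $\theta_2\mathrel\iota\theta_2'$. For CCSK transitions $t\mathrel\iota u$ iff connected and labels of $\hat t,\hat u$ satisfy $\iota$. Event equivalence $\sim$ on CCSK transitions: smallest equivalence with $t\sim t'$ whenever $t:P\to Q$, $u:P\to R$, $u':Q\to S$, $t':R\to S$ ($u'$ with label and direction of $u$, $t'$ of $t$) and $t\mathrel\iota u$; events are classes $[t]$. Core independence: $t\odot u$ iff there are coinitial $t'\in[t]$, $u'\in[u]$ with $t'\mathrel\iota u'$. Event key equivalence $\sim_{\mathsf k}$: forward $t_1:X_1\to X_1'$, $t_2:X_2\to X_2'$ with the same key $k$ satisfy $t_1\sim_{\mathsf k}t_2$ iff there is a path from $X_1'$ to $X_2'$ not using key $k$; in general $t_1\sim_{\mathsf k}t_2$ iff $\mathrm{fwd}(t_1)\sim_{\mathsf k}\mathrm{fwd}(t_2)$ with $\mathrm{fwd}(t)=t$ if forward, $\bar t$ otherwise. Transitions $t:P\to Q$ with label $\alpha[m]$ and $u:P\to R$ with label $\beta[n]$ are directly key independent if $m\ne n$ and there are $u':Q\to S$ with label $\beta[n]$ (direction of $u$) and $t':R\to S$ with label $\alpha[m]$ (direction of $t$). Connected CCSK transitions $t,u$ are key independent if there are $t',u'$ with $t\sim_{\mathsf k}t'$, $u\sim_{\mathsf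 k}u'$ and $t',u'$ directly key independent. *)

(* Defs.v *)
From Stdlib Require Import List Relations.
Import ListNotations.
Set Implicit Arguments.

Section CCSK.
Context {N : Type}.

Inductive act := Nm (a : N) | CoNm (a : N).
Inductive label := Vis (l : act) | Tau.
Definition compl (l : act) : act :=
  match l with Nm a => CoNm a | CoNm a => Nm a end.

Definition key := nat.

Inductive proc :=
| Nil
| Pre (a : label) (X : proc)
| Res (X : proc) (l : act)
| Sum (X Y : proc)
| Par (X Y : proc)
| KPre (a : label) (k : key) (X : proc).

Fixpoint keys (X : proc) : list key :=
  match X with
  | Nil => []
  | Pre _ X => keys X
  | Res X _ => keys X
  | Sum X Y => keys X ++ keys Y
  | Par X Y => keys X ++ keys Y
  | KPre _ k X => k :: keys X
  end.

Inductive dir := DL | DR.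
Definition flip (d : dir) := match d with DL => DR | DR => DL end.

(* proof keyed labels: a prefix upsilon of tags |_D, +_D over either an
   action alpha[k] or a synchronisation <theta_L, theta_R> *)
Inductive plab :=
| PAct (a : label) (k : key)
| PPar (d : dir) (th : plab)
| PSum (d : dir) (th : plab)
| PSyn (thL thR : plab).

Fixpoint ell (th : plab) : label :=
  match th with
  | PAct a _ => a
  | PPar _ th => ell th
  | PSum _ th => ell th
  | PSyn _ _ => Tau
  end.

Fixpoint pkey (th : plab) : key :=
  match th with
  | PAct _ k => k
  | PPar _ th => pkey th
  | PSum _ th => pkey th
  | PSyn thL _ => pkey thL
  end.

Inductive pfwd : proc -> plab -> proc -> Prop :=
| r_act a X k : keys X = [] -> pfwd (Pre a X) (PAct a k) (KPre a k X)
| r_pre a k X th X' : pfwd X th X' -> pkey th <> k ->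
    pfwd (KPre a k X) th (KPre a k X')
| r_res l X th X' : pfwd X th X' -> ell th <> Vis l -> ell th <> Vis (compl l) ->
    pfwd (Res X l) th (Res X' l)
| r_parL X Y th X' : pfwd X th X' -> ~ In (pkey th) (keys Y) ->
    pfwd (Par X Y) (PPar DL th) (Par X' Y)
| r_parR X Y th X' : pfwd X th X' -> ~ In (pkey th) (keys Y) ->
    pfwd (Par Y X) (PPar DR th) (Par Y X')
| r_syn l X Y th1 th2 X' Y' : pfwd X th1 X' -> pfwd Y th2 Y' ->
    ell th1 = Vis l -> ell th2 = Vis (compl l) -> pkey th1 = pkey th2 ->
    pfwd (Par X Y) (PSyn th1 th2) (Par X' Y')
| r_sumL X Y th X' : pfwd X th X' -> keys Y = [] ->
    pfwd (Sum X Y) (PSum DL th) (Sum X' Y)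
| r_sumR X Y th X' : pfwd X th X' -> keys Y = [] ->
    pfwd (Sum Y X) (PSum DR th) (Sum Y X').

Definition cfwd (P : proc) (a : label) (k : key) (Q : proc) : Prop :=
  exists th, pfwd P th Q /\ ell th = a /\ pkey th = k.

Record ctrans := CT { src : proc; lab : label; tkey : key; tgt : proc; fw : bool }.

Definition cstep (t : ctrans) : Prop :=
  if fw t then cfwd (src t) (lab t) (tkey t) (tgt t)
  else cfwd (tgt t) (lab t) (tkey t) (src t).

Definition step (P Q : proc) : Prop :=
  exists a k, cfwd P a k Q \/ cfwd Q a k P.
Definition path : relation proc := clos_refl_trans proc step.

Definition step_avoid (k : key) (P Q : proc) : Prop :=
  exists a j, j <> k /\ (cfwd P a j Q \/ cfwd Q a j P).
Definition path_avoid (k : key) : relation proc :=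
  clos_refl_trans proc (step_avoid k).

Definition reachable (P : proc) : Prop := exists X0, keys X0 = [] /\ path X0 P.

Definition valid (t : ctrans) : Prop := reachable (src t) /\ cstep t.

Definition connected (t u : ctrans) : Prop := path (src t) (tgt u).

Definition hat (t : ctrans) (th : plab) : Prop :=
  (if fw t then pfwd (src t) th (tgt t) else pfwd (tgt t) th (src t)) /\
  ell th = lab t /\ pkey th = tkey t.

Definition side (d : dir) (thL thR : plab) := match d with DL => thL | DR => thR end.

Inductive iota : plab -> plab -> Prop :=
| i_C1 d th th' : iota th th' -> iota (PSum d th) (PSum d th')
| i_P1 d th th' : iota th th' -> iota (PPar d th) (PPar d th')
| i_P2 d th th' : pkey th <> pkey th' -> iota (PPar d th) (PPar (flip d) th')
| i_S1 d th thL thR : iota th (side d thL thR) -> iota (PPar d th) (PSyn thL thR)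
| i_S2 d th thL thR : iota (side d thL thR) th -> iota (PSyn thL thR) (PPar d th)
| i_S3 th1 th2 th1' th2' : iota th1 th1' -> iota th2 th2' ->
    iota (PSyn th1 th2) (PSyn th1' th2').

Definition ciota (t u : ctrans) : Prop :=
  connected t u /\ exists tht thu, hat t tht /\ hat u thu /\ iota tht thu.

Definition square_rel (t t' : ctrans) : Prop :=
  exists u u', valid t /\ valid u /\ valid u' /\ valid t' /\
    src u = src t /\ src u' = tgt t /\ src t' = tgt u /\ tgt t' = tgt u' /\
    lab u' = lab u /\ tkey u' = tkey u /\ fw u' = fw u /\
    lab t' = lab t /\ tkey t' = tkey t /\ fw t' = fw t /\
    ciota t u.

Definition ev_eq : relation ctrans := clos_refl_sym_trans ctrans square_rel.

Definition core_indep (t u : ctrans) : Prop :=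
  exists t' u', ev_eq t t' /\ ev_eq u u' /\ src t' = src u' /\ ciota t' u'.

Definition fwdt (t : ctrans) : ctrans :=
  if fw t then t else CT (tgt t) (lab t) (tkey t) (src t) true.

Definition key_eq (t1 t2 : ctrans) : Prop :=
  tkey (fwdt t1) = tkey (fwdt t2) /\
  path_avoid (tkey (fwdt t1)) (tgt (fwdt t1)) (tgt (fwdt t2)).

Definition dkey_indep (t u : ctrans) : Prop :=
  src t = src u /\ tkey t <> tkey u /\
  exists u' t', valid u' /\ valid t' /\
    src u' = tgt t /\ src t' = tgt u /\ tgt u' = tgt t' /\
    lab u' = lab u /\ tkey u' = tkey u /\ fw u' = fw u /\
    lab t' = lab t /\ tkey t' = tkey t /\ fw t' = fw t.

Definition key_indep (t u : ctrans) : Prop :=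
  connected t u /\
  exists t' u', valid t' /\ valid u' /\ key_eq t t' /\ key_eq u u' /\
    dkey_indep t' u'.

End CCSK.

(* Main.v *)
Require Import Defs.
From Stdlib Require Import List Relations Classical Lia Wf_nat.
Import ListNotations.
Set Implicit Arguments.

Definition pstep {N : Type} (P : @proc N) th (b : bool) Q :=
  if b then pfwd P th Q else pfwd Q th P.

Fixpoint wfl {N : Type} (th : @plab N) : Prop :=
  match th with
  | PAct _ _ => True
  | PPar _ t => wfl t
  | PSum _ t => wfl t
  | PSyn a b => wfl a /\ wfl b /\ pkey a = pkey b
  end.

Lemma pfwd_wfl {N : Type} (X : @proc N) th X' : pfwd X th X' -> wfl th.
Proof. induction 1; simpl; auto. Qed.

Lemma pstep_wfl {N : Type} (X : @proc N) th b X' : pstep X th b X' -> wfl th.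
Proof. destruct b; simpl; apply pfwd_wfl. Qed.

Lemma keys_fwd {N : Type} (X : @proc N) th X' : pfwd X th X' ->
  (forall j, In j (keys X') <-> j = pkey th \/ In j (keys X)) /\
  ~ In (pkey th) (keys X) /\ length (keys X) < length (keys X').
Proof.
  induction 1; simpl.
  - rewrite H. simpl. split; [|split]; [intro j; split; intros [E|E]; auto; contradiction | tauto | lia].
  - destruct IHpfwd as [A [B C]]. split; [|split].
    + intro j. rewrite A. tauto.
    + intros [E|E]; [congruence|tauto].
    + lia.
  - exact IHpfwd.
  - destruct IHpfwd as [A [B C]]. split; [|split].
    + intro j. rewrite !in_app_iff, A. tauto.
    + rewrite in_app_iff; tauto.
    + rewrite !length_app; lia.
  - destruct IHpfwd as [A [B C]]. split; [|split].
    + intro j. rewrite !in_app_iff, A. tauto.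
    + rewrite in_app_iff; tauto.
    + rewrite !length_app; lia.
  - destruct IHpfwd1 as [A [B C]]. destruct IHpfwd2 as [A2 [B2 C2]]. split; [|split].
    + intro j. rewrite !in_app_iff, A, A2. rewrite <- H3. tauto.
    + rewrite in_app_iff. rewrite H3 in *. tauto.
    + rewrite !length_app; lia.
  - destruct IHpfwd as [A [B C]]. split; [|split].
    + intro j. rewrite !in_app_iff, A, H0. simpl. tauto.
    + rewrite in_app_iff, H0; simpl; tauto.
    + rewrite !length_app; lia.
  - destruct IHpfwd as [A [B C]]. split; [|split].
    + intro j. rewrite !in_app_iff, A, H0. simpl. tauto.
    + rewrite in_app_iff, H0; simpl; tauto.
    + rewrite !length_app; lia.
Qed.

Lemma keys_pstep_sub {N : Type} (X : @proc N) th b X' : pstep X th b X' ->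
  forall j, In j (keys X') -> j = pkey th \/ In j (keys X).
Proof.
  destruct b; simpl; intros H j Hj; apply keys_fwd in H; destruct H as [A _].
  - apply A; auto.
  - right. apply A. auto.
Qed.

Lemma keys_tgt {N : Type} (X : @proc N) th X' : pfwd X th X' -> In (pkey th) (keys X').
Proof. intro H. apply keys_fwd in H. apply (proj1 H). auto. Qed.

Lemma iota_keys {N : Type} (a b : @plab N) : iota a b -> wfl a -> wfl b -> pkey a <> pkey b.
Proof.
  induction 1; simpl; intros Wa Wb; auto.
  - destruct Wb as [W1 [W2 E]]. destruct d; simpl in *; auto.
    rewrite E; auto.
  - destruct Wa as [W1 [W2 E]]. destruct d; simpl in *; auto.
    rewrite E; auto.
  - destruct Wa as [? [? ?]]; destruct Wb as [? [? ?]]; auto.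
Qed.

Lemma inv_Nil {N : Type} th b (Q : @proc N) : pstep Nil th b Q -> False.
Proof. destruct b; simpl; intro H; inversion H. Qed.

Lemma inv_Pre {N : Type} a (X : @proc N) th b Q : pstep (Pre a X) th b Q ->
  b = true /\ exists k, th = PAct a k /\ Q = KPre a k X /\ keys X = [].
Proof. destruct b; simpl; intro H; inversion H; subst; eauto 10. Qed.

Lemma inv_KPre {N : Type} a k (X : @proc N) th b Q : pstep (KPre a k X) th b Q ->
  (exists X', Q = KPre a k X' /\ pstep X th b X' /\ pkey th <> k) \/
  (b = false /\ th = PAct a k /\ Q = Pre a X /\ keys X = []).
Proof. destruct b; simpl; intro H; inversion H; subst; eauto 10. Qed.

Lemma inv_Res {N : Type} (X : @proc N) l th b Q : pstep (Res X l) th b Q ->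
  exists X', Q = Res X' l /\ pstep X th b X' /\ ell th <> Vis l /\ ell th <> Vis (compl l).
Proof. destruct b; simpl; intro H; inversion H; subst; eauto 10. Qed.

Lemma inv_Sum {N : Type} (X Y : @proc N) th b Q : pstep (Sum X Y) th b Q ->
  (exists t0 X', th = PSum DL t0 /\ Q = Sum X' Y /\ pstep X t0 b X' /\ keys Y = []) \/
  (exists t0 Y', th = PSum DR t0 /\ Q = Sum X Y' /\ pstep Y t0 b Y' /\ keys X = []).
Proof. destruct b; simpl; intro H; inversion H; subst; eauto 10. Qed.

Lemma inv_Par {N : Type} (X Y : @proc N) th b Q : pstep (Par X Y) th b Q ->
  (exists t0 X', th = PPar DL t0 /\ Q = Par X' Y /\ pstep X t0 b X' /\ ~ In (pkey t0) (keys Y)) \/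
  (exists t0 Y', th = PPar DR t0 /\ Q = Par X Y' /\ pstep Y t0 b Y' /\ ~ In (pkey t0) (keys X)) \/
  (exists tL tR X' Y' l, th = PSyn tL tR /\ Q = Par X' Y' /\ pstep X tL b X' /\ pstep Y tR b Y'
     /\ ell tL = Vis l /\ ell tR = Vis (compl l) /\ pkey tL = pkey tR).
Proof. destruct b; simpl; intro H; inversion H; subst; eauto 20. Qed.

Lemma ps_pre {N : Type} a k (X : @proc N) th b X' : pstep X th b X' -> pkey th <> k ->
  pstep (KPre a k X) th b (KPre a k X').
Proof. destruct b; simpl; intros; constructor; auto. Qed.
Lemma ps_res {N : Type} (X : @proc N) l th b X' : pstep X th b X' -> ell th <> Vis l -> ell th <> Vis (compl l) ->
  pstep (Res X l) th b (Res X' l).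
Proof. destruct b; simpl; intros; constructor; auto. Qed.
Lemma ps_sumL {N : Type} (X Y : @proc N) th b X' : pstep X th b X' -> keys Y = [] ->
  pstep (Sum X Y) (PSum DL th) b (Sum X' Y).
Proof. destruct b; simpl; intros; constructor; auto. Qed.
Lemma ps_sumR {N : Type} (X Y : @proc N) th b Y' : pstep Y th b Y' -> keys X = [] ->
  pstep (Sum X Y) (PSum DR th) b (Sum X Y').
Proof. destruct b; simpl; intros; constructor; auto. Qed.
Lemma ps_parL {N : Type} (X Y : @proc N) th b X' : pstep X th b X' -> ~ In (pkey th) (keys Y) ->
  pstep (Par X Y) (PPar DL th) b (Par X' Y).
Proof. destruct b; simpl; intros; constructor; auto. Qed.
Lemma ps_parR {N : Type} (X Y : @proc N) th b Y' : pstep Y th b Y' -> ~ In (pkey th) (keys X) ->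
  pstep (Par X Y) (PPar DR th) b (Par X Y').
Proof. destruct b; simpl; intros; constructor; auto. Qed.
Lemma ps_syn {N : Type} (X Y : @proc N) tL tR b X' Y' l : pstep X tL b X' -> pstep Y tR b Y' ->
  ell tL = Vis l -> ell tR = Vis (compl l) -> pkey tL = pkey tR ->
  pstep (Par X Y) (PSyn tL tR) b (Par X' Y').
Proof. destruct b; simpl; intros; econstructor; eauto. Qed.


Lemma notin_step {N : Type} (X : @proc N) th b X' j : pstep X th b X' ->
  ~ In j (keys X) -> j <> pkey th -> ~ In j (keys X').
Proof. intros H A B C. destruct (keys_pstep_sub _ _ _ _ H _ C); auto. Qed.

Lemma iota_square {N : Type} (P : @proc N) : forall th1 th2 b1 b2 Q R,
  iota th1 th2 -> pstep P th1 b1 Q -> pstep P th2 b2 R ->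
  exists S, pstep Q th2 b2 S /\ pstep R th1 b1 S.
Proof.
  induction P; intros th1 th2 b1 b2 Q R Hi H1 H2.
  - exfalso; eapply inv_Nil; eauto.
  - apply inv_Pre in H1. destruct H1 as [_ [k [E _]]]. subst. inversion Hi.
  - apply inv_Res in H1; apply inv_Res in H2.
    destruct H1 as [X1 [E1 [S1 [A1 B1]]]]; destruct H2 as [X2 [E2 [S2 [A2 B2]]]]; subst.
    destruct (IHP _ _ _ _ _ _ Hi S1 S2) as [S [T1 T2]].
    exists (Res S l). split; apply ps_res; auto.
  - apply inv_Sum in H1; apply inv_Sum in H2.
    destruct H1 as [[t1 [X1 [E1 [E1' [S1 K1]]]]]|[t1 [X1 [E1 [E1' [S1 K1]]]]]];
    destruct H2 as [[t2 [X2 [E2 [E2' [S2 K2]]]]]|[t2 [X2 [E2 [E2' [S2 K2]]]]]]; subst;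
    inversion Hi; subst.
    + match goal with H: iota _ _ |- _ => destruct (IHP1 _ _ _ _ _ _ H S1 S2) as [S [T1 T2]] end.
      exists (Sum S P2). split; apply ps_sumL; auto.
    + match goal with H: iota _ _ |- _ => destruct (IHP2 _ _ _ _ _ _ H S1 S2) as [S [T1 T2]] end.
      exists (Sum P1 S). split; apply ps_sumR; auto.
  - apply inv_Par in H1; apply inv_Par in H2.
    destruct H1 as [[t1 [X1 [E1 [E1' [S1 K1]]]]]|[[t1 [X1 [E1 [E1' [S1 K1]]]]]|[tL1 [tR1 [X1 [Y1 [l1 [E1 [E1' [SL1 [SR1 [L1 [L1' K1]]]]]]]]]]]]];
    destruct H2 as [[t2 [X2 [E2 [E2' [S2 K2]]]]]|[[t2 [X2 [E2 [E2' [S2 K2]]]]]|[tL2 [tR2 [X2 [Y2 [l2 [E2 [E2' [SL2 [SR2 [L2 [L2' K2]]]]]]]]]]]]]; subst;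
    inversion Hi; subst; simpl in *.
    + match goal with H: iota _ _ |- _ => destruct (IHP1 _ _ _ _ _ _ H S1 S2) as [S [T1 T2]] end.
      exists (Par S P2). split; apply ps_parL; auto.
    + exists (Par X1 X2). split.
      * apply ps_parR; auto. eapply notin_step; eauto.
      * apply ps_parL; auto. eapply notin_step; eauto.
    + match goal with H: iota _ _ |- _ => rename H into Hio end.
      destruct (IHP1 _ _ _ _ _ _ Hio S1 SL2) as [S [T1 T2]].
      exists (Par S Y2). split.
      * eapply ps_syn; eauto.
      * apply ps_parL; auto. eapply notin_step; eauto.
        rewrite <- K2. apply iota_keys; eauto using pstep_wfl.
    + exists (Par X2 X1). split.
      * apply ps_parL; auto. eapply notin_step; eauto.
      * apply ps_parR; auto. eapply notin_step; eauto.
    + match goal with H: iota _ _ |- _ => destruct (IHP2 _ _ _ _ _ _ H S1 S2) as [S [T1 T2]] end.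
      exists (Par P1 S). split; apply ps_parR; auto.
    + match goal with H: iota _ _ |- _ => rename H into Hio end.
      destruct (IHP2 _ _ _ _ _ _ Hio S1 SR2) as [S [T1 T2]].
      exists (Par X2 S). split.
      * eapply ps_syn; eauto.
      * apply ps_parR; auto. eapply notin_step; eauto.
        rewrite K2. apply iota_keys; eauto using pstep_wfl.
    + match goal with H: iota _ _ |- _ => rename H into Hio end.
      destruct (IHP1 _ _ _ _ _ _ Hio SL1 S2) as [S [T1 T2]].
      exists (Par S Y1). split.
      * apply ps_parL; auto. eapply notin_step; eauto.
        rewrite <- K1. intro E. symmetry in E. revert E. apply iota_keys; eauto using pstep_wfl.
      * eapply ps_syn; eauto.
    + match goal with H: iota _ _ |- _ => rename H into Hio end.
      destruct (IHP2 _ _ _ _ _ _ Hio SR1 S2) as [S [T1 T2]].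
      exists (Par X1 S). split.
      * apply ps_parR; auto. eapply notin_step; eauto.
        rewrite K1. intro E. symmetry in E. revert E. apply iota_keys; eauto using pstep_wfl.
      * eapply ps_syn; eauto.
    + match goal with H: iota tL1 tL2 |- _ => rename H into HioL end.
      match goal with H: iota tR1 tR2 |- _ => rename H into HioR end.
      destruct (IHP1 _ _ _ _ _ _ HioL SL1 SL2) as [S [T1 T2]].
      destruct (IHP2 _ _ _ _ _ _ HioR SR1 SR2) as [S' [T1' T2']].
      exists (Par S S'). split; eapply ps_syn; eauto.
  - apply inv_KPre in H1; apply inv_KPre in H2.
    destruct H1 as [[X1 [E1 [S1 K1]]]|[_ [E1 _]]]; [|subst; inversion Hi].
    destruct H2 as [[X2 [E2 [S2 K2]]]|[_ [E2 _]]]; [|subst; inversion Hi].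
    subst. destruct (IHP _ _ _ _ _ _ Hi S1 S2) as [S [T1 T2]].
    exists (KPre a k S). split; apply ps_pre; auto.
Qed.


Ltac invstep H :=
  first [ apply inv_Par in H | apply inv_Sum in H | apply inv_KPre in H | apply inv_Res in H
        | apply inv_Pre in H | (exfalso; eapply inv_Nil; exact H) ].

Lemma back_iota {N : Type} (Y : @proc N) : forall Y1 Y2 th1 th2,
  pstep Y th1 false Y1 -> pstep Y th2 false Y2 -> pkey th1 <> pkey th2 -> iota th1 th2.
Proof.
  induction Y; intros Z1 Z2 th1 th2 H1 H2 K.
  - exfalso; eapply inv_Nil; eauto.
  - apply inv_Pre in H1. destruct H1 as [D _]; discriminate.
  - apply inv_Res in H1; apply inv_Res in H2.
    destruct H1 as [X1 [E1 [S1 [A1 B1]]]]; destruct H2 as [X2 [E2 [S2 [A2 B2]]]]; subst.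
    eapply IHY; eauto.
  - apply inv_Sum in H1; apply inv_Sum in H2.
    destruct H1 as [[t1 [X1 [E1 [E1' [S1 K1]]]]]|[t1 [X1 [E1 [E1' [S1 K1]]]]]];
    destruct H2 as [[t2 [X2 [E2 [E2' [S2 K2]]]]]|[t2 [X2 [E2 [E2' [S2 K2]]]]]]; subst; simpl in *.
    + constructor. eapply IHY1; eauto.
    + exfalso. apply keys_tgt in S1. rewrite K2 in S1. exact S1.
    + exfalso. apply keys_tgt in S2. rewrite K1 in S2. exact S2.
    + constructor. eapply IHY2; eauto.
  - apply inv_Par in H1; apply inv_Par in H2.
    destruct H1 as [[t1 [X1 [E1 [E1' [S1 K1]]]]]|[[t1 [X1 [E1 [E1' [S1 K1]]]]]|[tL1 [tR1 [X1 [Y1' [l1 [E1 [E1' [SL1 [SR1 [L1 [L1' K1]]]]]]]]]]]]];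
    destruct H2 as [[t2 [X2 [E2 [E2' [S2 K2]]]]]|[[t2 [X2 [E2 [E2' [S2 K2]]]]]|[tL2 [tR2 [X2 [Y2' [l2 [E2 [E2' [SL2 [SR2 [L2 [L2' K2]]]]]]]]]]]]]; subst; simpl in *;
    try congruence.
    + apply i_P1. eapply IHY1; eauto.
    + apply (@i_P2 _ DL). auto.
    + apply (@i_S1 _ DL). simpl. eapply IHY1; eauto.
    + apply (@i_P2 _ DR). auto.
    + apply i_P1. eapply IHY2; eauto.
    + apply (@i_S1 _ DR). simpl. eapply IHY2; eauto. rewrite <- K2. auto.
    + apply (@i_S2 _ DL). simpl. eapply IHY1; eauto.
    + apply (@i_S2 _ DR). simpl. eapply IHY2; eauto. rewrite <- K1. auto.
    + apply i_S3; [eapply IHY1|eapply IHY2]; eauto. rewrite <- K1, <- K2. auto.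
  - apply inv_KPre in H1; apply inv_KPre in H2.
    destruct H1 as [[X1 [E1 [S1 K1]]]|[_ [E1 [E1' K1]]]];
    destruct H2 as [[X2 [E2 [S2 K2]]]|[_ [E2 [E2' K2]]]]; subst; simpl in *.
    + eapply IHY; eauto.
    + exfalso. apply keys_tgt in S1. rewrite K2 in S1. exact S1.
    + exfalso. apply keys_tgt in S2. rewrite K1 in S2. exact S2.
    + congruence.
Qed.

Lemma back_same {N : Type} (Y : @proc N) : forall Y1 Y2 th1 th2,
  pstep Y th1 false Y1 -> pstep Y th2 false Y2 -> pkey th1 = pkey th2 -> Y1 = Y2 /\ th1 = th2.
Proof.
  induction Y; intros Z1 Z2 th1 th2 H1 H2 K.
  - exfalso; eapply inv_Nil; eauto.
  - apply inv_Pre in H1. destruct H1 as [D _]; discriminate.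
  - apply inv_Res in H1; apply inv_Res in H2.
    destruct H1 as [X1 [E1 [S1 [A1 B1]]]]; destruct H2 as [X2 [E2 [S2 [A2 B2]]]]; subst.
    destruct (IHY _ _ _ _ S1 S2 K); subst; auto.
  - apply inv_Sum in H1; apply inv_Sum in H2.
    destruct H1 as [[t1 [X1 [E1 [E1' [S1 K1]]]]]|[t1 [X1 [E1 [E1' [S1 K1]]]]]];
    destruct H2 as [[t2 [X2 [E2 [E2' [S2 K2]]]]]|[t2 [X2 [E2 [E2' [S2 K2]]]]]]; subst; simpl in *.
    + destruct (IHY1 _ _ _ _ S1 S2 K); subst; auto.
    + exfalso. apply keys_tgt in S1. rewrite K2 in S1. exact S1.
    + exfalso. apply keys_tgt in S2. rewrite K1 in S2. exact S2.
    + destruct (IHY2 _ _ _ _ S1 S2 K); subst; auto.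
  - apply inv_Par in H1; apply inv_Par in H2.
    destruct H1 as [[t1 [X1 [E1 [E1' [S1 K1]]]]]|[[t1 [X1 [E1 [E1' [S1 K1]]]]]|[tL1 [tR1 [X1 [Y1' [l1 [E1 [E1' [SL1 [SR1 [L1 [L1' K1]]]]]]]]]]]]];
    destruct H2 as [[t2 [X2 [E2 [E2' [S2 K2]]]]]|[[t2 [X2 [E2 [E2' [S2 K2]]]]]|[tL2 [tR2 [X2 [Y2' [l2 [E2 [E2' [SL2 [SR2 [L2 [L2' K2]]]]]]]]]]]]]; subst; simpl in *.
    + destruct (IHY1 _ _ _ _ S1 S2 K); subst; auto.
    + exfalso. apply keys_tgt in S2. apply K1. rewrite K. exact S2.
    + exfalso. apply keys_tgt in SR2. apply K1. rewrite K, K2. exact SR2.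
    + exfalso. apply keys_tgt in S2. apply K1. rewrite K. exact S2.
    + destruct (IHY2 _ _ _ _ S1 S2 K); subst; auto.
    + exfalso. apply keys_tgt in SL2. apply K1. rewrite K. exact SL2.
    + exfalso. apply keys_tgt in SR1. apply K2. rewrite <- K, K1. exact SR1.
    + exfalso. apply keys_tgt in SL1. apply K2. rewrite <- K. exact SL1.
    + destruct (IHY1 _ _ _ _ SL1 SL2 K); subst.
      destruct (IHY2 _ _ _ _ SR1 SR2); subst; auto. congruence.
  - apply inv_KPre in H1; apply inv_KPre in H2.
    destruct H1 as [[X1 [E1 [S1 K1]]]|[_ [E1 [E1' K1]]]];
    destruct H2 as [[X2 [E2 [S2 K2]]]|[_ [E2 [E2' K2]]]]; subst; simpl in *.
    + destruct (IHY _ _ _ _ S1 S2 K); subst; auto.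
    + congruence.
    + congruence.
    + auto.
Qed.


Definition bstep {N : Type} (k : key) (Y Y' : @proc N) := exists th, pfwd Y' th Y /\ pkey th <> k.
Definition normal {N : Type} (k : key) (Y : @proc N) := forall Y', ~ bstep k Y Y'.
Definition brt {N : Type} (k : key) := clos_refl_trans_1n (@proc N) (bstep k).

Lemma bstep_len {N : Type} k (Y Y' : @proc N) : bstep k Y Y' -> length (keys Y') < length (keys Y).
Proof. intros [th [H _]]. apply keys_fwd in H. tauto. Qed.

Lemma nf_exists {N : Type} k : forall (Y : @proc N), exists M, brt k Y M /\ normal k M.
Proof.
  assert (forall n (Y : @proc N), length (keys Y) = n -> exists M, brt k Y M /\ normal k M).
  { intro n. induction n as [n IH] using lt_wf_ind. intros Y E.
    destruct (classic (exists Y', bstep k Y Y')) as [[Y' B]|NB].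
    - destruct (IH (length (keys Y')) ltac:(rewrite <- E; eapply bstep_len; eauto) Y' eq_refl) as [M [R Nm]].
      exists M. split; auto. econstructor; eauto.
    - exists Y. split. constructor. intros Y' B. apply NB. eauto. }
  intro Y. eapply H. reflexivity.
Qed.

Lemma bstep_diamond {N : Type} k (Y Y1 Y2 : @proc N) : bstep k Y Y1 -> bstep k Y Y2 ->
  Y1 = Y2 \/ exists Z, bstep k Y1 Z /\ bstep k Y2 Z.
Proof.
  intros [th1 [H1 K1]] [th2 [H2 K2]].
  destruct (PeanoNat.Nat.eq_dec (pkey th1) (pkey th2)) as [E|E].
  - left. destruct (@back_same N Y Y1 Y2 th1 th2 H1 H2 E); auto.
  - right. pose proof (@back_iota N Y Y1 Y2 th1 th2 H1 H2 E) as Hi.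
    destruct (@iota_square N Y th1 th2 false false Y1 Y2 Hi H1 H2) as [S [T1 T2]].
    exists S. split; eexists; eauto.
Qed.

Lemma nf_unique {N : Type} k : forall n (Y : @proc N), length (keys Y) = n ->
  forall M1 M2, brt k Y M1 -> normal k M1 -> brt k Y M2 -> normal k M2 -> M1 = M2.
Proof.
  intro n. induction n as [n IH] using lt_wf_ind. intros Y E M1 M2 R1 N1 R2 N2.
  destruct R1 as [|Y1 M1' B1 R1'].
  - destruct R2 as [|Y2 M2' B2 R2']; auto. exfalso; eapply N1; eauto.
  - destruct R2 as [|Y2 M2' B2 R2']. { exfalso; eapply N2; eauto. }
    destruct (bstep_diamond B1 B2) as [Eq|[Z [C1 C2]]].
    + subst Y2. eapply (IH (length (keys Y1))); eauto. rewrite <- E. eapply bstep_len; eauto.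
    + destruct (nf_exists k Z) as [M3 [R3 N3]].
      assert (M1' = M3). { eapply (IH (length (keys Y1))); eauto.
        rewrite <- E; eapply bstep_len; eauto. econstructor; eauto. }
      assert (M2' = M3). { eapply (IH (length (keys Y2))); eauto.
        rewrite <- E; eapply bstep_len; eauto. econstructor; eauto. }
      congruence.
Qed.

Lemma path_avoid_nf {N : Type} k (Y Y' : @proc N) : path_avoid k Y Y' ->
  forall M, normal k M -> brt k Y M -> brt k Y' M.
Proof.
  induction 1; intros M Nm R; auto.
  destruct H as [a [j [Hj [[th [H [E1 E2]]]|[th [H [E1 E2]]]]]]].
  - econstructor; [|exact R]. exists th; split; auto; congruence.
  - destruct (nf_exists k y) as [M' [R' N']].
    assert (M = M'). { eapply nf_unique; eauto. econstructor; [|exact R'].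
      exists th; split; auto; congruence. }
    subst; auto.
Qed.

Lemma step_sym {N : Type} (P Q : @proc N) : step P Q -> step Q P.
Proof. intros [a [k [H|H]]]; exists a, k; auto. Qed.

Lemma path_sym {N : Type} (P Q : @proc N) : path P Q -> path Q P.
Proof.
  induction 1.
  - apply rt_step, step_sym; auto.
  - apply rt_refl.
  - eapply rt_trans; eauto.
Qed.

Lemma path_trans {N : Type} (P Q R : @proc N) : path P Q -> path Q R -> path P R.
Proof. intros; eapply rt_trans; eauto. Qed.

Lemma reach_path {N : Type} (P Q : @proc N) : reachable P -> path P Q -> reachable Q.
Proof. intros [X0 [E H]] H'. exists X0. split; auto. eapply rt_trans; eauto. Qed.

Lemma pfwd_step {N : Type} (P Q : @proc N) th : pfwd P th Q -> step P Q.
Proof. intro H. exists (ell th), (pkey th). left. exists th; auto. Qed.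

Lemma pfwd_path {N : Type} (P Q : @proc N) th : pfwd P th Q -> path P Q.
Proof. intro H. apply rt_step. eapply pfwd_step; eauto. Qed.

Lemma pfwd_path' {N : Type} (P Q : @proc N) th : pfwd P th Q -> path Q P.
Proof. intro H. apply path_sym. eapply pfwd_path; eauto. Qed.

Lemma cstep_path {N : Type} (t : @ctrans N) : cstep t -> path (src t) (tgt t).
Proof.
  unfold cstep. destruct (fw t); intros [th [H _]].
  - eapply pfwd_path; eauto.
  - eapply pfwd_path'; eauto.
Qed.

Lemma bstep_path {N : Type} k (Y Y' : @proc N) : bstep k Y Y' -> path Y Y'.
Proof. intros [th [H _]]. eapply pfwd_path'; eauto. Qed.


Lemma chain {N : Type} k : forall (B M : @proc N), brt k B M -> forall A th, pfwd A th B -> pkey th = k -> reachable A ->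
  exists AM, pfwd AM th M /\
    ev_eq (CT A (ell th) k B true) (CT AM (ell th) k M true) /\
    ev_eq (CT B (ell th) k A false) (CT M (ell th) k AM false).
Proof.
  induction 1 as [B|x y z Hb Hr IH]; intros A th H K RA.
  - exists A. split; auto. split; apply rst_refl.
  - destruct Hb as [thj [Hj Kj]].
    assert (Hi : iota th thj).
    { apply (@back_iota N x A y th thj H Hj). congruence. }
    destruct (@iota_square N x th thj false false A y Hi H Hj) as [Z [T1 T2]].
    simpl in T1, T2.
    assert (RZ : reachable Z). { apply (reach_path RA). eapply pfwd_path'; eauto. }
    assert (Rx : reachable x). { apply (reach_path RA). eapply pfwd_path; eauto. }
    assert (Ry : reachable y). { apply (reach_path RZ). eapply pfwd_path; eauto. }
    destruct (IH Z th T2 K RZ) as [AM [HM [E1 E2]]].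
    exists AM. split; auto. split.
    + eapply rst_trans; [|exact E1]. apply rst_step.
      exists (CT A (ell thj) (pkey thj) Z false), (CT x (ell thj) (pkey thj) y false).
      repeat split; simpl; auto; try (eexists; split; [eassumption|auto]).
      * eapply pfwd_path'; eauto.
      * exists th, thj. repeat split; simpl; auto.
    + eapply rst_trans; [|exact E2]. apply rst_step.
      exists (CT x (ell thj) (pkey thj) y false), (CT A (ell thj) (pkey thj) Z false).
      repeat split; simpl; auto; try (eexists; split; [eassumption|auto]).
      * eapply pfwd_path'; eauto.
      * exists th, thj. repeat split; simpl; auto.
Qed.

Lemma KE {N : Type} (t1 t2 : @ctrans N) : valid t1 -> valid t2 -> fw t1 = fw t2 -> key_eq t1 t2 -> ev_eq t1 t2.
Proof.
  destruct t1 as [s1 l1 k1 g1 f1], t2 as [s2 l2 k2 g2 f2]; simpl.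
  intros [R1 C1] [R2 C2] Ef [Ek Hp]; subst f2. unfold cstep in *; simpl in *.
  destruct f1; simpl in *.
  - destruct C1 as [th1 [H1 [L1 K1]]]. destruct C2 as [th2 [H2 [L2 K2]]]. subst.
    destruct (nf_exists (pkey th1) g1) as [M [RM NM]].
    pose proof (path_avoid_nf Hp NM RM) as RM2.
    destruct (chain RM H1 eq_refl R1) as [A1 [HA1 [E1 _]]].
    rewrite Ek in RM2.
    destruct (chain RM2 H2 eq_refl R2) as [A2 [HA2 [E2 _]]].
    destruct (@back_same N M A1 A2 th1 th2 HA1 HA2 Ek). subst.
    eapply rst_trans; [exact E1|]. apply rst_sym; exact E2.
  - destruct C1 as [th1 [H1 [L1 K1]]]. destruct C2 as [th2 [H2 [L2 K2]]]. subst.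
    destruct (nf_exists (pkey th1) s1) as [M [RM NM]].
    pose proof (path_avoid_nf Hp NM RM) as RM2.
    assert (R1' : reachable g1). { apply (reach_path R1). eapply pfwd_path'; eauto. }
    assert (R2' : reachable g2). { apply (reach_path R2). eapply pfwd_path'; eauto. }
    destruct (chain RM H1 eq_refl R1') as [A1 [HA1 [_ E1]]].
    rewrite Ek in RM2.
    destruct (chain RM2 H2 eq_refl R2') as [A2 [HA2 [_ E2]]].
    destruct (@back_same N M A1 A2 th1 th2 HA1 HA2 Ek). subst.
    eapply rst_trans; [exact E1|]. apply rst_sym; exact E2.
Qed.

Lemma fwdt_tkey {N : Type} (t : @ctrans N) : tkey (fwdt t) = tkey t.
Proof. unfold fwdt; destruct (fw t); reflexivity. Qed.

Lemma path_avoid_sym {N : Type} k (P Q : @proc N) : path_avoid k P Q -> path_avoid k Q P.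
Proof.
  induction 1.
  - apply rt_step. destruct H as [a [j [Hj Hs]]]. exists a, j. tauto.
  - apply rt_refl.
  - eapply rt_trans; eauto.
Qed.

Lemma key_eq_sym {N : Type} (t1 t2 : @ctrans N) : key_eq t1 t2 -> key_eq t2 t1.
Proof. intros [E P]. split; auto. rewrite <- E. apply path_avoid_sym; auto. Qed.

Lemma key_eq_trans {N : Type} (t1 t2 t3 : @ctrans N) : key_eq t1 t2 -> key_eq t2 t3 -> key_eq t1 t3.
Proof. intros [E P] [E' P']. split; [congruence|]. eapply rt_trans; eauto. rewrite E; auto. Qed.

Lemma hat_pstep {N : Type} (t : @ctrans N) th : hat t th -> pstep (src t) th (fw t) (tgt t).
Proof. unfold hat, pstep; intros [H _]; exact H. Qed.

Lemma ciota_keys {N : Type} (t u : @ctrans N) : ciota t u -> tkey t <> tkey u.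
Proof.
  intros [_ [tht [thu [Ht [Hu Hi]]]]].
  destruct Ht as [Pt [_ Kt]], Hu as [Pu [_ Ku]]. rewrite <- Kt, <- Ku.
  apply iota_keys; auto.
  - destruct (fw t); eapply pfwd_wfl; eauto.
  - destruct (fw u); eapply pfwd_wfl; eauto.
Qed.

Lemma valid_avoid {N : Type} (u : @ctrans N) k : valid u -> tkey u <> k -> step_avoid k (src u) (tgt u).
Proof.
  intros [_ C] K. unfold cstep in C. exists (lab u), (tkey u). split; auto.
  destruct (fw u); auto.
Qed.

Lemma square_key_eq {N : Type} (t t' : @ctrans N) : square_rel t t' -> key_eq t t'.
Proof.
  intros [u [u' [Vt [Vu [Vu' [Vt' [E1 [E2 [E3 [E4 [L1 [L2 [L3 [L4 [L5 [L6 Ci]]]]]]]]]]]]]]]].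
  pose proof (ciota_keys Ci) as K.
  destruct t as [s l k g f], t' as [s' l' k' g' f']; simpl in *.
  subst l' k' f'.
  unfold key_eq, fwdt; simpl.
  destruct f; simpl; split; auto.
  - apply rt_step. rewrite <- E2, E4. apply valid_avoid; auto; congruence.
  - apply rt_step. rewrite <- E1, E3. apply valid_avoid; auto; congruence.
Qed.

Lemma EK {N : Type} (t1 t2 : @ctrans N) : ev_eq t1 t2 -> key_eq t1 t2.
Proof.
  induction 1.
  - apply square_key_eq; auto.
  - split; auto. apply rt_refl.
  - apply key_eq_sym; auto.
  - eapply key_eq_trans; eauto.
Qed.

Lemma ev_valid {N : Type} (t1 t2 : @ctrans N) : ev_eq t1 t2 -> t1 = t2 \/ (valid t1 /\ valid t2).
Proof.
  induction 1.
  - right. destruct H as [u [u' [Vt [_ [_ [Vt' _]]]]]]. auto.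
  - auto.
  - destruct IHclos_refl_sym_trans; [left|right]; intuition.
  - destruct IHclos_refl_sym_trans1 as [E|[A B]]; destruct IHclos_refl_sym_trans2 as [E'|[A' B']]; subst; auto.
Qed.

Lemma ev_path {N : Type} (t1 t2 : @ctrans N) : ev_eq t1 t2 -> path (src t1) (src t2).
Proof.
  induction 1.
  - destruct H as [u [u' [Vt [Vu [_ [Vt' [E1 [E2 [E3 _]]]]]]]]].
    rewrite <- E1, E3. apply cstep_path. apply Vu.
  - apply rt_refl.
  - apply path_sym; auto.
  - eapply rt_trans; eauto.
Qed.


Lemma pfwd_avoid {N : Type} (P Q : @proc N) th k : pfwd P th Q -> pkey th <> k ->
  path_avoid k P Q /\ path_avoid k Q P.
Proof.
  intros H K. split; apply rt_step; exists (ell th), (pkey th); split; auto.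
  - left; exists th; auto.
  - right; exists th; auto.
Qed.

Lemma corner {N : Type} (T A1 A2 Z : @proc N) th1 th2 b1 b2 :
  pfwd A1 th1 T -> pfwd A2 th2 T -> pfwd Z th2 A1 -> pfwd Z th1 A2 -> pkey th1 <> pkey th2 ->
  exists C X1 X2, pstep C th1 b1 X1 /\ pstep C th2 b2 X2 /\
    path_avoid (pkey th1) T (if b1 then X1 else C) /\
    path_avoid (pkey th2) T (if b2 then X2 else C) /\ path T C.
Proof.
  intros H1 H2 H3 H4 K.
  destruct b1, b2.
  - exists Z, A2, A1. simpl. repeat split; auto.
    + apply (pfwd_avoid H2); auto.
    + apply (pfwd_avoid H1); auto.
    + eapply rt_trans; eapply pfwd_path'; eauto.
  - exists A1, T, Z. simpl. repeat split; auto.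
    + apply rt_refl.
    + apply (pfwd_avoid H1); auto.
    + eapply pfwd_path'; eauto.
  - exists A2, Z, T. simpl. repeat split; auto.
    + apply (pfwd_avoid H2); auto.
    + apply rt_refl.
    + eapply pfwd_path'; eauto.
  - exists T, A1, A2. simpl. repeat split; auto.
    + apply rt_refl.
    + apply rt_refl.
    + apply rt_refl.
Qed.

Lemma pstep_cstep {N : Type} (C X : @proc N) th b : pstep C th b X -> cstep (CT C (ell th) (pkey th) X b).
Proof. unfold pstep, cstep; destruct b; simpl; intro H; exists th; auto. Qed.

Lemma pstep_path {N : Type} (C X : @proc N) th b : pstep C th b X -> path C X.
Proof. intro H. exact (cstep_path _ (pstep_cstep _ _ _ _ H)). Qed.

Lemma tgt_fwdt {N : Type} (C X : @proc N) l k b : tgt (fwdt (CT C l k X b)) = if b then X else C.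
Proof. destruct b; reflexivity. Qed.

Lemma valid_fwd {N : Type} (t : @ctrans N) : valid t ->
  exists A B th, pfwd A th B /\ ell th = lab t /\ pkey th = tkey t /\ reachable A /\ reachable B /\
    fwdt t = CT A (lab t) (tkey t) B true.
Proof.
  intros [R C]. unfold cstep, fwdt in *. destruct t as [s l k g f]; simpl in *.
  destruct f; destruct C as [th [H [L K]]].
  - exists s, g, th. repeat split; auto. apply (reach_path R). eapply pfwd_path; eauto.
  - exists g, s, th. repeat split; auto. apply (reach_path R). eapply pfwd_path'; eauto.
Qed.

Ltac fin := first
  [ apply rt_refl
  | match goal with H : pfwd ?A _ ?B |- path_avoid _ ?A ?B => refine (proj1 (pfwd_avoid H _)); congruence end
  | match goal with H : pfwd ?A _ ?B |- path_avoid _ ?B ?A => refine (proj2 (pfwd_avoid H _)); congruence end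
  | match goal with H : pfwd ?A _ ?B, R : reachable ?A |- reachable ?B => apply (reach_path R); eapply pfwd_path; exact H end
  | match goal with H : pfwd ?A _ ?B, R : reachable ?B |- reachable ?A => apply (reach_path R); eapply pfwd_path'; exact H end ].

Lemma top_corner {N : Type} (t u : @ctrans N) : valid t -> valid u -> dkey_indep t u ->
  exists T A1 A2 th1 th2, pfwd A1 th1 T /\ pfwd A2 th2 T /\ ell th1 = lab t /\ pkey th1 = tkey t /\
    ell th2 = lab u /\ pkey th2 = tkey u /\ reachable T /\
    path_avoid (tkey t) (tgt (fwdt t)) T /\ path_avoid (tkey u) (tgt (fwdt u)) T.
Proof.
  intros Vt Vu [Es [Kd [u' [t' [Vu' [Vt' [E1 [E2 [E3 [L1 [L2 [L3 [L4 [L5 L6]]]]]]]]]]]]]].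
  destruct t as [s1 l1 k1 g1 f1], u as [s2 l2 k2 g2 f2], t' as [s3 l3 k3 g3 f3], u' as [s4 l4 k4 g4 f4].
  simpl in *. subst.
  destruct Vt as [Rt Ct], Vu as [Ru Cu], Vt' as [Rt' Ct'], Vu' as [Ru' Cu'].
  unfold cstep in *; simpl in *.
  destruct f1, f2; simpl in *;
  destruct Ct as [th1 [H1 [La Ka]]], Cu as [th2 [H2 [Lb Kb]]],
           Ct' as [th3 [H3 [Lc Kc]]], Cu' as [th4 [H4 [Ld Kd']]];
  subst.
  - exists g3, g2, g1, th3, th4. repeat split; auto; fin.
  - exists g1, s2, g3, th1, th4. repeat split; auto; fin.
  - exists g2, g3, s2, th3, th2. repeat split; auto; fin.
  - exists s2, g1, g2, th1, th2. repeat split; auto; fin.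
Qed.


Lemma valid_pstep {N : Type} (C X : @proc N) th b l k : reachable C -> pstep C th b X ->
  ell th = l -> pkey th = k -> valid (CT C l k X b).
Proof. intros R H E K. subst. split; auto. exact (pstep_cstep _ _ _ _ H). Qed.

Theorem proposition6p12 (N : Type) (t u : @ctrans N) :
  valid t -> valid u -> (key_indep t u <-> core_indep t u).
Proof.
  intros Vt Vu; split.
  - intros [Con [t' [u' [Vt' [Vu' [Kt [Ku Dk]]]]]]].
    destruct (top_corner Vt' Vu' Dk) as [T [A1 [A2 [th1 [th2 [H1 [H2 [L1 [K1 [L2 [K2 [RT [P1 P2]]]]]]]]]]]]].
    assert (Kd : pkey th1 <> pkey th2) by (destruct Dk as [_ [Kd _]]; congruence).
    pose proof (@back_iota N T A1 A2 th1 th2 H1 H2 Kd) as Hi.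
    destruct (@iota_square N T th1 th2 false false A1 A2 Hi H1 H2) as [Z [HZ1 HZ2]].
    simpl in HZ1, HZ2.
    destruct (corner (fw t) (fw u) H1 H2 HZ1 HZ2 Kd) as [C [X1 [X2 [S1 [S2 [Pa [Pb PC]]]]]]].
    assert (RC : reachable C) by (apply (reach_path RT); auto).
    assert (Vt3 : valid (CT C (ell th1) (pkey th1) X1 (fw t))) by (eapply valid_pstep; eauto).
    assert (Vu3 : valid (CT C (ell th2) (pkey th2) X2 (fw u))) by (eapply valid_pstep; eauto).
    exists (CT C (ell th1) (pkey th1) X1 (fw t)), (CT C (ell th2) (pkey th2) X2 (fw u)).
    split; [|split; [|split]].
    + apply KE; auto. eapply key_eq_trans; [exact Kt|].
      split; rewrite !fwdt_tkey; simpl; auto.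
      rewrite tgt_fwdt. eapply rt_trans; [exact P1|]. rewrite <- K1. exact Pa.
    + apply KE; auto. eapply key_eq_trans; [exact Ku|].
      split; rewrite !fwdt_tkey; simpl; auto.
      rewrite tgt_fwdt. eapply rt_trans; [exact P2|]. rewrite <- K2. exact Pb.
    + reflexivity.
    + split.
      * simpl. exact (pstep_path _ _ _ _ S2).
      * exists th1, th2. split; [|split]; auto.
        -- split; auto.
        -- split; auto.
  - intros [t' [u' [Et [Eu [Es Ci]]]]].
    assert (Vt' : valid t') by (destruct (ev_valid Et) as [E|[_ V]]; [subst; auto|auto]).
    assert (Vu' : valid u') by (destruct (ev_valid Eu) as [E|[_ V]]; [subst; auto|auto]).
    split.
    + unfold connected. eapply rt_trans; [exact (ev_path Et)|]. rewrite Es.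
      eapply rt_trans; [exact (path_sym (ev_path Eu))|]. apply cstep_path. apply Vu.
    + exists t', u'. split; [|split; [|split; [|split]]]; auto using EK.
      pose proof (ciota_keys Ci) as Kd.
      destruct Ci as [_ [tht [thu [Ht [Hu Hi]]]]].
      pose proof (hat_pstep Ht) as St. pose proof (hat_pstep Hu) as Su. rewrite <- Es in Su.
      destruct (@iota_square N (src t') tht thu (fw t') (fw u') (tgt t') (tgt u') Hi St Su) as [S [T1 T2]].
      destruct Ht as [_ [Lt Kt]], Hu as [_ [Lu Ku]].
      split; auto. split; auto.
      exists (CT (tgt t') (lab u') (tkey u') S (fw u')), (CT (tgt u') (lab t') (tkey t') S (fw t')).
      assert (R1 : reachable (tgt t')) by (apply (reach_path (proj1 Vt')); apply cstep_path; apply Vt').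
      assert (R2 : reachable (tgt u')) by (apply (reach_path (proj1 Vu')); apply cstep_path; apply Vu').
      pose proof (@valid_pstep N _ _ thu _ _ _ R1 T1 Lu Ku) as W1.
      pose proof (@valid_pstep N _ _ tht _ _ _ R2 T2 Lt Kt) as W2.
      simpl. repeat split; auto; first [apply W1 | apply W2].
Qed.
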